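(* Let $\varphi\colon[\mathbb{F}_2,\mathbb{F}_2]\to\mathbb{Z}$ be the homomorphism defined below. If $g\in[\mathbb{F}_2,\mathbb{F}_2]$ is a product of two squares in $\mathbb{F}_2$ (i.e. $g=a^2b^2$ with $a,b\in\mathbb{F}_2$), then $\varphi(g)$ is even.
   Context: $\mathbb{F}_2$ is the free group on $x,y$. Let $\tilde K$ be the graph with vertex set $\mathbb{Z}^2$ and oriented edges $x^iy^jX$ from $(i,j)$ to $(i+1,j)$ and $x^iy^jY$ from $(i,j)$ to $(i,j+1)$ (the universal abelian cover of the wedge of two circles). A $1$-chain is written $\alpha=P_\alpha(x,y)X+Q_\alpha(x,y)Y$ with $P_\alpha,Q_\alpha$ integer Laurent polynomials (the coefficient of $x^iy^j$ in $P_\alpha$ is the coefficient of the edge $x^iy^jX$, similarly for $Q_\alpha$). For $g\in[\mathbb{F}_2,\mathbb{F}_2]$ written as a word in $x^{\pm1},y^{\pm1}$, the associated cycle $\alpha_g$ is the $1$-cycle traced by the lattice path starting at $(0,0)$ in which a letter $x$ (resp. $x^{-1}$, $y$, $y^{-1}$) moves by $(1,0)$ (resp. $(-1,0)$, $(0,1)$, $(0,-1)$) along the corresponding edge, each edge counted with sign $+1$ if traversed in its orientation and $-1$ otherwise; its homology class depends only on $g$. Let $f_\alpha(y)=P_\alpha(1,y)$. Define $\varphi(g)=f_{\alpha_g}'(1)$; this is a homomorphism $[\mathbb{F}_2,\mathbb{F}_2]\to\mathbb{Z}$. *)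

(* Defs.v *)
From mathcomp Require Import all_boot all_order all_algebra.
Set Implicit Arguments. Unset Strict Implicit. Unset Printing Implicit Defensive.
Import Order.TTheory GRing.Theory Num.Theory.
Local Open Scope ring_scope.

(* A letter of the alphabet {x, x^-1, y, y^-1}: (is_y, is_inverse). *)
Definition letter := (bool * bool)%type.
Definition lx : letter := (false, false).
Definition lX : letter := (false, true).
Definition ly : letter := (true, false).
Definition lY : letter := (true, true).

Definition inv_letter (l : letter) : letter := (l.1, ~~ l.2).

Definition reduce (w : seq letter) : seq letter :=
  foldr (fun l acc => match acc with
                      | h :: t => if h == inv_letter l then t else l :: acc
                      | [::] => [:: l]
                      end) [::] w.

(* Elements of F_2 are the freely reduced words. *)
Definition reduced (w : seq letter) : Prop := reduce w = w.

Definition fmul (u v : seq letter) : seq letter := reduce (u ++ v).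
Definition finv (u : seq letter) : seq letter := rev (map inv_letter u).
Definition fcomm (u v : seq letter) : seq letter :=
  fmul (fmul (fmul (finv u) (finv v)) u) v.

Inductive in_comm_sub : seq letter -> Prop :=
| comm_one : in_comm_sub [::]
| comm_gen u v : reduced u -> reduced v -> in_comm_sub (fcomm u v)
| comm_mul g h : in_comm_sub g -> in_comm_sub h -> in_comm_sub (fmul g h)
| comm_inv g : in_comm_sub g -> in_comm_sub (finv g).

(* The 1-chain traced by the lattice path of a word, starting at vertex p:
   a list of (edge, sign), where edge = (is_Y_edge, (i,j)) denotes the
   edge x^i y^j X (resp. x^i y^j Y) starting at (i,j). *)
Fixpoint path_chain (p : int * int) (w : seq letter)
  : seq ((bool * (int * int)) * int) :=
  match w with
  | [::] => [::]
  | l :: w' =>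
    let '(i, j) := p in
    match l with
    | (false, false) => ((false, (i, j)), 1) :: path_chain (i + 1, j) w'
    | (false, true)  => ((false, (i - 1, j)), -1) :: path_chain (i - 1, j) w'
    | (true, false)  => ((true, (i, j)), 1) :: path_chain (i, j + 1) w'
    | (true, true)   => ((true, (i, j - 1)), -1) :: path_chain (i, j - 1) w'
    end
  end.

Definition alpha (g : seq letter) := path_chain (0, 0) g.

(* f_alpha(y) = P_alpha(1,y) = sum over X-edges x^i y^j X of (coeff) * y^j;
   its derivative at y = 1 is sum over X-edges of (coeff) * j. *)
Definition fprime1 (a : seq ((bool * (int * int)) * int)) : int :=
  \sum_(e <- a | ~~ e.1.1) e.2 * e.1.2.2.

Definition phi (g : seq letter) : int := fprime1 (alpha g).

(* Main.v *)
Require Import Defs.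
From mathcomp Require Import all_boot all_order all_algebra.
From mathcomp Require Import ring lra zify.
Local Open Scope ring_scope.
Import GRing.Theory.

Definition sgn (l : letter) : int := if l.2 then -1 else 1.

Fixpoint cnt (b : bool) (w : seq letter) : int :=
  match w with [::] => 0 | l :: w' => (if l.1 == b then sgn l else 0) + cnt b w' end.

Fixpoint ph (j : int) (w : seq letter) : int :=
  match w with
  | [::] => 0
  | l :: w' => (if l.1 then 0 else sgn l * j) + ph (j + (if l.1 then sgn l else 0)) w'
  end.

Definition step (l : letter) (acc : seq letter) : seq letter :=
  match acc with
  | h :: t => if h == inv_letter l then t else l :: acc
  | [::] => [:: l]
  end.

Lemma reduce_cons l w : reduce (l :: w) = step l (reduce w).
Proof. by []. Qed.

Lemma sgn_inv l : sgn (inv_letter l) = - sgn l.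
Proof. by case: l => [[] []]. Qed.

Lemma cnt_step b l r : cnt b (step l r) = cnt b (l :: r).
Proof.
case: r => [|h t] //=.
case: eqP => [->|_] //=.
by case: l => [[] []] /=; case: b; rewrite /sgn /=; lia.
Qed.

Lemma cnt_reduce b w : cnt b (reduce w) = cnt b w.
Proof. by elim: w => [|l w IH] //; rewrite reduce_cons cnt_step /= IH. Qed.

Lemma cnt_cat b u v : cnt b (u ++ v) = cnt b u + cnt b v.
Proof. by elim: u => [|l u IH] /=; [rewrite add0r | rewrite IH addrA]. Qed.

Lemma cnt_finv b u : cnt b (Defs.finv u) = - cnt b u.
Proof.
rewrite /Defs.finv; elim: u => [|l u IH] //=.
rewrite rev_cons -cats1 cnt_cat IH /= sgn_inv.
by case: (l.1 == b); lia.
Qed.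

Lemma cnt_comm b g : in_comm_sub g -> cnt b g = 0.
Proof.
elim => [//|u v _ _|g1 h _ IHg _ IHh|g1 _ IH].
- rewrite /fcomm /fmul !cnt_reduce !cnt_cat !cnt_reduce !cnt_cat ?cnt_reduce ?cnt_cat !cnt_finv; lia.
- by rewrite /fmul cnt_reduce cnt_cat IHg IHh.
- by rewrite cnt_finv IH.
Qed.

Lemma ph_step j l r : ph j (step l r) = ph j (l :: r).
Proof.
case: r => [|h t] //=.
case: eqP => [->|_] //=.
by case: l => [[] []] /=; rewrite /sgn /= ?subrK ?addrK ?addr0 ?add0r; lia.
Qed.

Lemma ph_reduce j w : ph j (reduce w) = ph j w.
Proof.
elim: w j => [|l w IH] j //; rewrite reduce_cons ph_step /= IH //.
Qed.

Lemma ph_cat j u v : ph j (u ++ v) = ph j u + ph (j + cnt true u) v.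
Proof.
elim: u j => [|l u IH] j /=; first by rewrite add0r addr0.
rewrite IH addrA; congr (_ + ph _ v).
by case: l => [[] []] /=; rewrite /sgn /=; lia.
Qed.

Lemma ph_shift j w : ph j w = ph 0 w + j * cnt false w.
Proof.
elim: w j => [|l w IH] j /=; first by rewrite mulr0 addr0.
rewrite IH [ph (0 + _) w]IH.
by case: l => [[] []] /=; rewrite /sgn /=; ring.
Qed.

Lemma ph_chain i j w : fprime1 (path_chain (i, j) w) = ph j w.
Proof.
rewrite /fprime1.
elim: w i j => [|l w IH] i j /=; first by rewrite big_nil.
case: l => [[] []] /=; rewrite big_cons /= IH /sgn /= ?addr0 ?add0r; ring.
Qed.

Theorem lemma2p3 (a b : seq letter) :
  reduced a -> reduced b ->
  in_comm_sub (fmul (fmul a a) (fmul b b)) ->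
  (2 %| phi (fmul (fmul a a) (fmul b b)))%Z.
Proof.
move=> _ _ H.
have Hx := cnt_comm false _ H.
have Hy := cnt_comm true _ H.
move: Hx Hy.
rewrite /phi /alpha ph_chain /fmul ph_reduce !cnt_reduce !cnt_cat !cnt_reduce !cnt_cat.
rewrite !ph_cat !ph_reduce !ph_cat !cnt_reduce !cnt_cat.
rewrite !add0r (ph_shift (cnt true a)) (ph_shift (_ + _ + _)) (ph_shift (_ + _)).
rewrite ?add0r.
move=> Hx Hy.
have ->: cnt false b = - cnt false a by lia.
have ->: cnt true b = - cnt true a by lia.
apply/dvdzP.
exists (ph 0 a + ph 0 b + cnt true a * cnt false a - 2 * cnt true a * cnt false a).
ring.
Qed.
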